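(* Fix integers $d\geq 2$ and $n\geq d+2$. For every configuration $X=\{x_i\}_{i\in[n]}$ in the unit sphere $S^{d-1}\subseteq\mathbb{R}^d$, if $\alpha(X)>0$ then $\delta(X)<1$.
   Context: $[n]=\{1,\ldots,n\}$. For a configuration $X=\{x_i\}_{i\in[n]}$ in $S^{d-1}$, $\alpha(X):=\max_{i\neq j}\langle x_i,x_j\rangle$ and $\delta(X):=\min_{j\in[n]}\operatorname{dist}(x_j,\operatorname{conv}\{x_i\}_{i\in[n]\setminus\{j\}})$, with Euclidean distance. *)

(* Defs.v *)
From HB Require Import structures.
From mathcomp Require Import all_boot all_order all_algebra.
From mathcomp Require Import classical_sets reals.
Set Implicit Arguments. Unset Strict Implicit. Unset Printing Implicit Defensive.
Import Order.TTheory GRing.Theory Num.Theory.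
Local Open Scope ring_scope.
Local Open Scope classical_set_scope.

Definition dotp (R : realType) (d : nat) (u v : 'rV[R]_d) : R :=
  \sum_(k < d) u 0 k * v 0 k.

Definition enorm (R : realType) (d : nat) (u : 'rV[R]_d) : R :=
  Num.sqrt (dotp u u).
Definition edist (R : realType) (d : nat) (u v : 'rV[R]_d) : R :=
  enorm (u - v).

Definition on_sphere (R : realType) (d n : nat) (X : 'I_n -> 'rV[R]_d) : Prop :=
  forall i, enorm (X i) = 1.

(* alpha(X) = max_{i <> j} <x_i, x_j>: supremum of the finite set of inner
   products over pairs i <> j (a maximum when n >= 2). *)
Definition alpha (R : realType) (d n : nat) (X : 'I_n -> 'rV[R]_d) : R :=
  sup [set dotp (X ij.1) (X ij.2) | ij in [set ij : 'I_n * 'I_n | ij.1 != ij.2]].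

Definition conv_others (R : realType) (d n : nat) (X : 'I_n -> 'rV[R]_d)
    (j : 'I_n) : set 'rV[R]_d :=
  [set y | exists w : 'I_n -> R,
     [/\ (forall i, 0 <= w i), w j = 0, \sum_(i < n) w i = 1 &
         y = \sum_(i < n) w i *: X i]].

Definition dist_set (R : realType) (d : nat) (x : 'rV[R]_d) (S : set 'rV[R]_d) : R :=
  inf [set edist x y | y in S].

Definition delta (R : realType) (d n : nat) (X : 'I_n -> 'rV[R]_d) : R :=
  inf [set dist_set (X j) (conv_others X j) | j in [set: 'I_n]].

(* Main.v *)
Require Import Defs.
From HB Require Import structures.
From mathcomp Require Import all_boot all_order all_algebra.
From mathcomp Require Import classical_sets reals.
From mathcomp Require Import zify ring lra.
Set Implicit Arguments. Unset Strict Implicit.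
Import Order.TTheory GRing.Theory Num.Theory.
Local Open Scope ring_scope.

Section Dot.
Variables (R : realType) (d : nat).
Implicit Types u v w : 'rV[R]_d.

Lemma dotpC u v : dotp u v = dotp v u.
Proof. by apply: eq_bigr => k _; rewrite mulrC. Qed.
Lemma dotpDl u v w : dotp (u + w) v = dotp u v + dotp w v.
Proof. by rewrite /dotp -big_split; apply: eq_bigr => k _; rewrite !mxE mulrDl. Qed.
Lemma dotpZl a u v : dotp (a *: u) v = a * dotp u v.
Proof. by rewrite /dotp mulr_sumr; apply: eq_bigr => k _; rewrite !mxE mulrA. Qed.
Lemma dotpNl u v : dotp (- u) v = - dotp u v.
Proof. by rewrite -scaleN1r dotpZl mulN1r. Qed.
Lemma dotp0l v : dotp 0 v = 0.
Proof. by rewrite /dotp big1 // => k _; rewrite mxE mul0r. Qed.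
Lemma dotpBl u v w : dotp (u - w) v = dotp u v - dotp w v.
Proof. by rewrite dotpDl dotpNl. Qed.
Lemma dotpDr u v w : dotp v (u + w) = dotp v u + dotp v w.
Proof. by rewrite dotpC dotpDl !(dotpC v). Qed.
Lemma dotpZr a u v : dotp v (a *: u) = a * dotp v u.
Proof. by rewrite dotpC dotpZl dotpC. Qed.
Lemma dotpBr u v w : dotp v (u - w) = dotp v u - dotp v w.
Proof. by rewrite dotpC dotpBl !(dotpC v). Qed.
Lemma dotp_suml n (F : 'I_n -> 'rV[R]_d) v :
  dotp (\sum_i F i) v = \sum_i dotp (F i) v.
Proof.
by apply: (big_morph (fun u => dotp u v)) => [x y|]; rewrite ?dotpDl ?dotp0l.
Qed.
Lemma dotpp_ge0 u : 0 <= dotp u u.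
Proof. by apply: sumr_ge0 => k _; rewrite -expr2 sqr_ge0. Qed.
Lemma edist_lt1 u v : dotp (u - v) (u - v) < 1 -> edist u v < 1.
Proof.
move=> h; rewrite /edist /enorm -sqrtr1 ltr_sqrt //; lra.
Qed.
End Dot.

Lemma affdep (R : realType) d n (X : 'I_n -> 'rV[R]_d) : (d + 2 <= n)%N ->
  exists l : 'I_n -> R,
    [/\ exists i, l i != 0, \sum_i l i = 0 & \sum_i l i *: X i = 0].
Proof.
move=> dn.
pose A : 'M[R]_(n, d) := \matrix_i X i.
pose B : 'M[R]_(n, 1) := const_mx 1.
pose M := row_mx A B.
have : ~~ row_free M.
  rewrite /row_free; apply/negP => /eqP e.
  have := rank_leq_col M; rewrite e; lia.
rewrite -kermx_eq0 => /rowV0Pn [v /sub_kermxP vM v0].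
case/rV0Pn: v0 => i vi.
move: vM; rewrite mul_mx_row => /eqP; rewrite row_mx_eq0 => /andP[/eqP h1 /eqP h2].
exists (fun i => v 0 i); split.
- by exists i.
- have := congr1 (fun m : 'M[R]_1 => m 0 0) h2; rewrite !mxE => e; rewrite -[RHS]e.
  by rewrite /B; under [RHS]eq_bigr do rewrite mxE mulr1.
- apply: etrans h1; rewrite mulmx_sum_row; apply: eq_bigr => k _; by rewrite rowK.
Qed.

Local Open Scope classical_set_scope.

Lemma dotp_sub (R : realType) d (u v : 'rV[R]_d) :
  dotp (u - v) (u - v) = dotp u u - 2 * dotp u v + dotp v v.
Proof. rewrite dotpBl !dotpBr (dotpC v u); ring. Qed.

Lemma dotpp_eq0 (R : realType) d (u : 'rV[R]_d) : dotp u u = 0 -> u = 0.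
Proof.
move=> h; apply/rowP => k; rewrite mxE.
have ge : forall k, xpredT k -> 0 <= u 0 k * u 0 k.
  by move=> k' _; rewrite -expr2 sqr_ge0.
have hk := @psumr_eq0P _ _ xpredT (fun k => u 0 k * u 0 k) ge h k isT.
by apply/eqP; rewrite -sqrf_eq0 expr2 /= hk.
Qed.

Lemma edist_ge0 (R : realType) d (u v : 'rV[R]_d) : 0 <= edist u v.
Proof. exact: sqrtr_ge0. Qed.

Lemma dist_set_le (R : realType) d (x y : 'rV[R]_d) S : S y ->
  dist_set x S <= edist x y.
Proof.
move=> Sy; apply: ge_inf; last by exists y.
by exists 0 => _ [z _ <-]; apply: edist_ge0.
Qed.

Lemma dist_set_ge0 (R : realType) d (x : 'rV[R]_d) S : 0 <= dist_set x S.
Proof.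
rewrite /dist_set.
have [->|/set0P [z Sz]] := eqVneq S set0.
  by rewrite image_set0 inf0.
apply: lb_le_inf; first by exists (edist x z), z.
by move=> _ [y _ <-]; apply: edist_ge0.
Qed.

Lemma delta_le (R : realType) d n (X : 'I_n -> 'rV[R]_d) j y :
  conv_others X j y -> delta X <= edist (X j) y.
Proof.
move=> hy; apply: le_trans (dist_set_le _ hy).
apply: ge_inf; last by exists j.
by exists 0 => _ [k _ <-]; apply: dist_set_ge0.
Qed.

Lemma alpha_pos (R : realType) d n (X : 'I_n -> 'rV[R]_d) : (2 <= n)%N ->
  0 < alpha X -> exists i j, i != j /\ 0 < dotp (X i) (X j).
Proof.
move=> n2 /sup_gt [].
  have h0 : (0 < n)%N by lia.
  have h1 : (1 < n)%N by lia.
  by exists (dotp (X (Ordinal h0)) (X (Ordinal h1))), (Ordinal h0, Ordinal h1).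
by move=> _ [[i j] /= ij <-] hp; exists i, j.
Qed.

Lemma sum_ind (R : realType) n (i : 'I_n) (F : 'I_n -> R) :
  \sum_k (k == i)%:R * F k = F i.
Proof.
by rewrite (bigD1 i) //= eqxx mul1r big1 ?addr0 // => k /negbTE->; rewrite mul0r.
Qed.

Lemma sum_indZ (R : realType) d n (i : 'I_n) (F : 'I_n -> 'rV[R]_d) :
  \sum_k (k == i)%:R *: F k = F i.
Proof.
by rewrite (bigD1 i) //= eqxx scale1r big1 ?addr0 // => k /negbTE->; rewrite scale0r.
Qed.

Unset Implicit Arguments.

Theorem lemma4 (R : realType) (d n : nat) (X : 'I_n -> 'rV[R]_d) :
  (2 <= d)%N -> (d + 2 <= n)%N -> on_sphere X ->
  0 < alpha X -> delta X < 1.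
Proof.
move=> d2 dn sph /alpha_pos [|i [j [ij cpos]]]; first by lia.
have unit k : dotp (X k) (X k) = 1.
  by rewrite -(sqr_sqrtr (dotpp_ge0 (X k))); have := sph k; rewrite /enorm => ->; rewrite expr1n.
set c := dotp (X i) (X j) in cpos.
have c1 : c <= 1.
  have := dotpp_ge0 (X i - X j); rewrite dotp_sub !unit -/c; lra.
have [l [[i0 li0] lsum lX]] := affdep X dn.
pose pos k := if 0 <= l k then l k else 0.
pose neg k := if 0 <= l k then 0 else - l k.
have pos_ge0 k : 0 <= pos k by rewrite /pos; case: ifP.
have neg_ge0 k : 0 <= neg k.
  by rewrite /neg; case: ifP => // /negbT; rewrite -ltNge => h; lra.
have lE k : l k = pos k - neg k.
  by rewrite /pos /neg; case: ifP => _; rewrite ?subr0 ?sub0r ?opprK.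
have posneg k : pos k != 0 -> neg k = 0.
  by rewrite /pos /neg; case: ifP => //; rewrite eqxx.
set s := \sum_k pos k.
have sneg : \sum_k neg k = s.
  have e : \sum_k l k = \sum_k pos k - \sum_k neg k.
    by rewrite -sumrB; apply: eq_bigr => k _; rewrite lE.
  rewrite -/s lsum in e; lra.
have spos : 0 < s.
  rewrite lt_neqAle sumr_ge0 ?andbT //; apply/negP => /eqP s0.
  have p0 := psumr_eq0P (fun k _ => pos_ge0 k) (esym s0).
  have n0 := psumr_eq0P (fun k _ => neg_ge0 k) (etrans sneg (esym s0)).
  by move: li0; rewrite lE p0 // n0 // subrr eqxx.
have sn0 : s != 0 by rewrite gt_eqF.
pose a k := pos k / s.
pose b k := neg k / s.
have a_ge0 k : 0 <= a k by rewrite divr_ge0 // ltW.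
have b_ge0 k : 0 <= b k by rewrite divr_ge0 // ltW.
have asum : \sum_k a k = 1 by rewrite -mulr_suml divff.
have bsum : \sum_k b k = 1 by rewrite -mulr_suml sneg divff.
have ab k : a k != 0 -> b k = 0.
  by rewrite /a /b mulf_eq0 invr_eq0 (negbTE sn0) orbF => /posneg ->; rewrite mul0r.
pose p := \sum_k a k *: X k.
have bp : \sum_k b k *: X k = p.
  have e : \sum_k pos k *: X k = \sum_k neg k *: X k.
    have e : \sum_k l k *: X k = \sum_k pos k *: X k - \sum_k neg k *: X k.
      by rewrite -sumrB; apply: eq_bigr => k _; rewrite lE scalerBl.
    by apply/eqP; rewrite -subr_eq0 -e lX.
  rewrite /p /a /b.
  under eq_bigr do rewrite mulrC -scalerA.
  under [RHS]eq_bigr do rewrite mulrC -scalerA.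
  by rewrite -!scaler_sumr e.
have [p0|pn0] := eqVneq p 0.
  have [w [w0 wj ws wx]] : exists w : 'I_n -> R,
      [/\ (forall k, 0 <= w k), w j = 0, \sum_k w k = 1 & \sum_k w k *: X k = 0].
    case: (eqVneq (a j) 0) => h.
    - by exists a; split.
    - by exists b; split => //; [exact: ab | rewrite bp].
  pose w' k := (1 - c) * w k + c * (k == i)%:R.
  have hy : conv_others X j (c *: X i).
    exists w'; split.
    - move=> k; apply: addr_ge0; apply: mulr_ge0 => //; try lra.
    - have ji : j != i by rewrite eq_sym.
      by rewrite /w' wj (negbTE ji) /= mulr0n !mulr0 addr0.
    - rewrite big_split /= -mulr_sumr ws.
      under eq_bigr do rewrite mulrC.
      rewrite sum_ind; ring.
    - rewrite /w'; under eq_bigr do rewrite scalerDl -scalerA -scalerA.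
      rewrite big_split /= -!scaler_sumr wx sum_indZ scaler0 add0r //.
  apply: le_lt_trans (delta_le hy) _; apply: edist_lt1.
  rewrite dotp_sub dotpZr dotpZl dotpZr !unit (dotpC (X j) (X i)) -/c; nra.
have pp : 0 < dotp p p.
  rewrite lt_neqAle dotpp_ge0 andbT eq_sym; apply/eqP => /dotpp_eq0.
  by apply/eqP.
pose F k := a k * (dotp p p - 2 * dotp (X k) p).
have Fsum : \sum_k F k = - dotp p p.
  rewrite /F; under eq_bigr do rewrite mulrBr mulrCA.
  rewrite sumrB -mulr_suml asum -mulr_sumr.
  under [X in 2 * X]eq_bigr do rewrite -dotpZl.
  rewrite -dotp_suml -/p; ring.
have : ~~ [forall k, 0 <= F k].
  apply/negP => /forallP h; have := @sumr_ge0 _ _ (index_enum _) xpredT F (fun k _ => h k).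
  rewrite Fsum; lra.
case/forallPn => k; rewrite -ltNge => Fk.
have ak : 0 < a k.
  rewrite lt_neqAle a_ge0 andbT eq_sym; apply/negP => /eqP a0.
  by move: Fk; rewrite /F a0 mul0r ltxx.
move: Fk; rewrite /F pmulr_rlt0 // => Fk.
have hy : conv_others X k p.
  exists b; split => //; first by apply: ab; rewrite gt_eqF.
apply: le_lt_trans (delta_le hy) _; apply: edist_lt1.
rewrite dotp_sub unit; lra.
Qed.
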